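(* In the private bug bounty model described in the context, if $(\boldsymbol v^*,\boldsymbol v_a^*,\boldsymbol q_a^* )$ is a solution to the designer's problem, then there exists another solution $(\boldsymbol v^{**},\boldsymbol v_a^{**},\boldsymbol q_a^{**})$ such that $\boldsymbol v_a^{**}=(v_a^{1**},0,\dots,0)$.
   Context: Private bug bounty model. There are $L$ potential organic bugs $l=1,\dots,L$; bug $l$ exists with probability $\mu^l\in(0,1]$, independently across bugs, has complexity $q^l\in(0,1]$, and the designer values finding it at $w^l\in[0,\infty)$. There are $n$ risk-neutral agents with private search costs $c_i$ drawn i.i.d. from a distribution $F$ with support $[\underline c,\overline c]$ ($-\infty\le\underline c<\overline c\le\infty$, $\overline c>0$), $F$ continuous with full support, finite density $f$, and $F/f$ non-decreasing. The designer has budget $\overline v>0$, sets prizes $\boldsymbol v=(v^l)_l$, $v^l\ge0$, for organic bugs, and inserts $K$ artificial bugs (existing with certainty, of no value to the designer) with prizes $\boldsymbol v_a=(v_a^k)_k$, $v_a^k\ge0$, and complexities $\boldsymbol q_a=(q_a^k)_k$, $q_a^k\in[0,1]$. Each agent chooses whether to search at cost $c_i$; a searching agent finds each existing bug of complexity $q$ with probability $q$, independently across agents and bugs; the prize of each found bug is paid to one of its finders chosen uniformly at random. $\Phi(\hat c;q)$ is the probability that a searching agent wins the prize of an existing bug of complexity $q$ when each other agent searches iff his/her cost is at most $\hat c$; $\Psi(\hat c;\boldsymbol v,\boldsymbol v_a,\boldsymbol q_a)=\sum_l v^l\mu^l\Phi(\hat c;q^l)+\sum_k v_a^k\Phi(\hat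 c;q_a^k)$. The equilibrium threshold $c^*=c^*(\boldsymbol v,\boldsymbol v_a,\boldsymbol q_a)$ is the symmetric Bayes–Nash equilibrium threshold: $c^*=\underline c$ if $\Psi(\underline c)\le\underline c$, $c^*=\overline c$ if $\Psi(\overline c)\ge\overline c$, and otherwise the unique solution of $\hat c=\Psi(\hat c)$. Let $P(\hat c;q)=1-(1-qF(\hat c))^n$. The designer's problem is $$\max_{\boldsymbol v,\boldsymbol v_a,\boldsymbol q_a}\ \sum_l (w^l-v^l)\mu^lP(c^*;q^l)-\sum_k v_a^kP(c^*;q_a^k)\quad\text{s.t.}\quad \sum_l v^l+\sum_k v_a^k\le\overline v,\ v^l\ge0,\ v_a^k\ge0,\ q_a^k\in[0,1].$$ *)

(* Defs.v *)
From Stdlib Require Import Reals Lra ClassicalEpsilon.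
From Coquelicot Require Import Coquelicot.
Open Scope R_scope.

(* sumR m g = g 0 + ... + g (m-1)  (indices are 0-based: bug l of the paper is index l-1) *)
Fixpoint sumR (m : nat) (g : nat -> R) : R :=
  match m with
  | O => 0
  | S m' => sumR m' g + g m'
  end.

Definition cost_cdf (cl ch : Rbar) (F f : R -> R) : Prop :=
  Rbar_lt cl ch /\ Rbar_lt (Finite 0) ch /\
  (forall x y, x <= y -> F x <= F y) /\
  (forall x, continuous F x) /\
  is_lim F m_infty 0 /\ is_lim F p_infty 1 /\
  (forall x, Rbar_le (Finite x) cl -> F x = 0) /\
  (forall x, Rbar_le ch (Finite x) -> F x = 1) /\
  (* full support: strictly increasing on the support *)
  (forall x y, Rbar_le cl (Finite x) -> x < y -> Rbar_le (Finite y) ch -> F x < F y) /\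
  (forall x, Rbar_lt cl (Finite x) -> Rbar_lt (Finite x) ch ->
       is_derive F x (f x) /\ 0 < f x) /\
  (forall x y, Rbar_lt cl (Finite x) -> x <= y -> Rbar_lt (Finite y) ch ->
       F x / f x <= F y / f y).

(* Phi(c; q): probability that a searching agent wins the prize of an existing
   bug of complexity q when each of the n-1 other agents searches iff cost <= c.
   He finds it w.p. q; the number k of other finders is Binomial(n-1, q F(c));
   he wins with prob. 1/(k+1). *)
Definition Phi (n : nat) (F : R -> R) (c q : R) : R :=
  let p := q * F c in
  q * sumR n (fun k => Binomial.C (n - 1) k * p ^ k * (1 - p) ^ (n - 1 - k) / INR (k + 1)).

Definition Pfind (n : nat) (F : R -> R) (c q : R) : R :=
  1 - (1 - q * F c) ^ n.

Definition Psi (n L K : nat) (F : R -> R) (mu q : nat -> R)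
    (v va qa : nat -> R) (c : R) : R :=
  sumR L (fun l => v l * mu l * Phi n F c (q l)) + sumR K (fun k => va k * Phi n F c (qa k)).

Definition is_threshold (cl ch : Rbar) (Ps : R -> R) (c : R) : Prop :=
  let low := exists a, cl = Finite a /\ Ps a <= a in
  let high := exists b, ch = Finite b /\ b <= Ps b in
  (cl = Finite c /\ Ps c <= c) \/
  (~ low /\ ch = Finite c /\ c <= Ps c) \/
  (~ low /\ ~ high /\ Rbar_lt cl (Finite c) /\ Rbar_lt (Finite c) ch /\ Ps c = c).

(* the equilibrium threshold c* (the paper's definition singles out one value) *)
Definition cstar (n L K : nat) (cl ch : Rbar) (F : R -> R) (mu q : nat -> R)
    (v va qa : nat -> R) : R :=
  epsilon (inhabits 0) (is_threshold cl ch (Psi n L K F mu q v va qa)).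

Definition feasible (L K : nat) (vbar : R) (v va qa : nat -> R) : Prop :=
  sumR L v + sumR K va <= vbar /\
  (forall l, (l < L)%nat -> 0 <= v l) /\
  (forall k, (k < K)%nat -> 0 <= va k /\ 0 <= qa k <= 1).

Definition objective (n L K : nat) (cl ch : Rbar) (F : R -> R) (mu q w : nat -> R)
    (v va qa : nat -> R) : R :=
  let c := cstar n L K cl ch F mu q v va qa in
  sumR L (fun l => (w l - v l) * mu l * Pfind n F c (q l))
  - sumR K (fun k => va k * Pfind n F c (qa k)).

Definition is_solution (n L K : nat) (cl ch : Rbar) (F : R -> R) (mu q w : nat -> R)
    (vbar : R) (v va qa : nat -> R) : Prop :=
  feasible L K vbar v va qa /\
  forall v' va' qa', feasible L K vbar v' va' qa' ->
    objective n L K cl ch F mu q w v' va' qa' <= objective n L K cl ch F mu q w v va qa.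

(* Main.v *)
Require Import Defs.
From Stdlib Require Import Reals Lra Lia ClassicalEpsilon FunctionalExtensionality PropExtensionality.
From Coquelicot Require Import Coquelicot.
Open Scope R_scope.

Lemma sumR_ext m g h : (forall k, (k < m)%nat -> g k = h k) -> sumR m g = sumR m h.
Proof. induction m; simpl; intros H; auto. rewrite IHm by (intros; apply H; lia). rewrite H by lia. auto. Qed.

Lemma sumR_le m g h : (forall k, (k < m)%nat -> g k <= h k) -> sumR m g <= sumR m h.
Proof. induction m; simpl; intros H; [lra|]. assert (H1 := H m ltac:(lia)). assert (sumR m g <= sumR m h) by (apply IHm; intros; apply H; lia). lra. Qed.

Lemma sumR_scal m a g : sumR m (fun k => a * g k) = a * sumR m g.
Proof. induction m; simpl; [ring|]. rewrite IHm; ring. Qed.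

Lemma sumR_plus m g h : sumR m (fun k => g k + h k) = sumR m g + sumR m h.
Proof. induction m; simpl; [ring|]. rewrite IHm; ring. Qed.

Lemma sumR_shift m g : sumR (S m) g = g O + sumR m (fun k => g (S k)).
Proof. induction m; simpl in *; [ring|]. rewrite IHm. ring. Qed.

Lemma sumR_f_R0 m g : sumR (S m) g = sum_f_R0 g m.
Proof. induction m; simpl in *; [ring|]. rewrite IHm. ring. Qed.

Lemma sumR_zero m g : (forall k, (k < m)%nat -> g k = 0) -> sumR m g = 0.
Proof. intros H. rewrite (sumR_ext m g (fun _ => 0)) by auto. induction m; simpl; [ring|]. rewrite IHm; [ring|]. intros; apply H; lia. Qed.

Definition G (n : nat) (x : R) := sumR n (fun j => (1 - x) ^ j).

Lemma G_tel n x : x * G n x = 1 - (1 - x) ^ n.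
Proof. unfold G. induction n; simpl; [ring|]. rewrite Rmult_plus_distr_l, IHn. simpl. ring. Qed.

Lemma C_shift m k : (k <= m)%nat -> INR (S m) * Binomial.C m k / INR (S k) = Binomial.C (S m) (S k).
Proof.
  intros Hk. unfold Binomial.C. replace (S m - S k)%nat with (m - k)%nat by lia.
  rewrite !fact_simpl, !mult_INR.
  assert (INR (Factorial.fact k) <> 0) by apply INR_fact_neq_0.
  assert (INR (Factorial.fact (m - k)) <> 0) by apply INR_fact_neq_0.
  assert (INR (S k) <> 0) by (apply not_0_INR; lia).
  field. auto.
Qed.

Lemma B_closed n p : (1 <= n)%nat ->
  INR n * sumR n (fun k => Binomial.C (n - 1) k * p ^ k * (1 - p) ^ (n - 1 - k) / INR (k + 1)) = G n p.
Proof.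
  intros Hn. destruct n as [|m]; [lia|]. simpl (S m - 1)%nat. rewrite Nat.sub_0_r.
  destruct (Req_dec p 0) as [Hp|Hp].
  - subst p. rewrite sumR_shift. rewrite sumR_zero.
    + unfold G. rewrite (sumR_ext _ _ (fun _ => 1)).
      * assert (E: Binomial.C m 0 * 0^0 * (1-0)^(m-0)/INR(0+1) = 1)
          by (rewrite C_n_0, Nat.sub_0_r, Rminus_0_r, pow1; simpl; field).
        rewrite E. clear. rewrite Rplus_0_r, Rmult_1_r.
        induction (S m). reflexivity. rewrite S_INR. simpl sumR. rewrite <- IHn. reflexivity.
      * intros. rewrite Rminus_0_r, pow1. auto.
    + intros k _. simpl. rewrite Rmult_0_l, Rmult_0_r. unfold Rdiv. ring.
  - apply (Rmult_eq_reg_l p); auto. rewrite G_tel.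
    rewrite <- sumR_scal, <- sumR_scal.
    rewrite (sumR_ext _ _ (fun k => Binomial.C (S m) (S k) * p ^ (S k) * (1 - p) ^ (S m - S k))).
    + assert (Hb := binomial p (1 - p) (S m)). rewrite <- sumR_f_R0, sumR_shift in Hb.
      replace (p + (1 - p)) with 1 in Hb by ring. rewrite pow1, C_n_0, Nat.sub_0_r in Hb. simpl (p ^ 0) in Hb. lra.
    + intros k Hk. rewrite <- C_shift by lia. replace (S m - S k)%nat with (m - k)%nat by lia.
      replace (k + 1)%nat with (S k) by lia. simpl (p ^ S k).
      assert (INR (S k) <> 0) by (apply not_0_INR; lia). field. auto.
Qed.

Lemma Phi_closed n F c q : (1 <= n)%nat -> Phi n F c q = q * G n (q * F c) / INR n.
Proof.
  intros Hn. unfold Phi. rewrite <- (B_closed n (q * F c)) by auto.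
  assert (INR n <> 0) by (apply not_0_INR; lia). field. auto.
Qed.

Lemma Pfind_Phi n F c q : (1 <= n)%nat -> Pfind n F c q = INR n * F c * Phi n F c q.
Proof.
  intros Hn. rewrite Phi_closed by auto. unfold Pfind. rewrite <- G_tel.
  assert (INR n <> 0) by (apply not_0_INR; lia). field. auto.
Qed.

Lemma F_bounds cl ch F f : cost_cdf cl ch F f -> forall x, 0 <= F x <= 1.
Proof.
  intros (_ & _ & Hmon & _ & Hm & Hp & _) x. split.
  - assert (H := is_lim_le_loc F (fun _ => F x) m_infty 0 (F x)).
    simpl in H. apply H; auto.
    + exists x. intros y Hy. apply Hmon; lra.
    + apply is_lim_const.
  - assert (H := is_lim_le_loc (fun _ => F x) F p_infty (F x) 1).
    simpl in H. apply H; auto.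
    + exists x. intros y Hy. apply Hmon; lra.
    + apply is_lim_const.
Qed.

Lemma G_ge1 n y : (1 <= n)%nat -> 0 <= y <= 1 -> 1 <= G n y.
Proof.
  intros Hn Hy. destruct n as [|m]; [lia|]. unfold G. rewrite sumR_shift. simpl (_ ^ 0).
  assert (0 <= sumR m (fun k => (1 - y) ^ S k)).
  { replace 0 with (sumR m (fun _ => 0)) by (apply sumR_zero; auto). apply sumR_le. intros; apply pow_le; lra. }
  lra.
Qed.

Lemma G_anti n y1 y2 : 0 <= y1 <= y2 -> y2 <= 1 -> G n y2 <= G n y1.
Proof.
  intros H1 H2. unfold G. apply sumR_le. intros k _. apply pow_incr. lra.
Qed.

Section PhiProps.
Variables (n : nat) (F : R -> R).
Hypothesis Hn : (1 <= n)%nat.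
Hypothesis HF : forall x, 0 <= F x <= 1.
Hypothesis HFm : forall x y, x <= y -> F x <= F y.

Lemma INRn_pos : 0 < INR n.
Proof. apply lt_0_INR. lia. Qed.

Lemma Phi_nonneg c q : 0 <= q <= 1 -> 0 <= Phi n F c q.
Proof.
  intros [Hq1 Hq2]. rewrite Phi_closed by auto. destruct (HF c) as [Ha Hb]. assert (Hn' := INRn_pos).
  assert (1 <= G n (q * F c)) by (apply G_ge1; auto; split; nra).
  apply Rmult_le_pos. nra. left; apply Rinv_0_lt_compat; auto.
Qed.

Lemma Phi_anti c1 c2 q : 0 <= q <= 1 -> c1 <= c2 -> Phi n F c2 q <= Phi n F c1 q.
Proof.
  intros Hq Hc. rewrite !Phi_closed by auto. destruct (HF c1) as [Ha1 Hb1]. destruct (HF c2) as [Ha2 Hb2]. destruct Hq as [Hq1 Hq2].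
  assert (H12 := HFm c1 c2 Hc). assert (Hn' := INRn_pos).
  assert (G n (q * F c2) <= G n (q * F c1)) by (apply G_anti; nra).
  unfold Rdiv. apply Rmult_le_compat_r. left; apply Rinv_0_lt_compat; auto. nra.
Qed.

Lemma Phi_le1 c q : 0 <= q <= 1 -> Phi n F c q <= Phi n F c 1.
Proof.
  intros [Hq1 Hq2]. rewrite !Phi_closed by auto. destruct (HF c) as [Ha Hb]. assert (Hn' := INRn_pos).
  rewrite !Rmult_1_l. unfold Rdiv. apply Rmult_le_compat_r. left; apply Rinv_0_lt_compat; auto.
  destruct (Req_dec (F c) 0) as [H0|H0].
  - rewrite H0, !Rmult_0_r. assert (1 <= G n 0) by (apply G_ge1; auto; lra). nra.
  - apply (Rmult_le_reg_l (F c)). lra.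
    replace (F c * (q * G n (q * F c))) with ((q * F c) * G n (q * F c)) by ring.
    rewrite !G_tel. assert ((1 - F c) ^ n <= (1 - q * F c) ^ n) by (apply pow_incr; split; nra). lra.
Qed.

Lemma Phi1_pos c : 0 < Phi n F c 1.
Proof.
  rewrite Phi_closed by auto. destruct (HF c) as [Ha Hb]. assert (Hn' := INRn_pos).
  assert (1 <= G n (1 * F c)) by (apply G_ge1; auto; lra).
  apply Rdiv_lt_0_compat; lra.
Qed.

End PhiProps.

Lemma cont_sumR m (g : nat -> R -> R) x :
  (forall k, continuity_pt (g k) x) -> continuity_pt (fun c => sumR m (fun k => g k c)) x.
Proof.
  intros H. induction m; simpl.
  - apply continuity_pt_const. intros a b; auto.
  - apply (continuity_pt_plus (fun c => sumR m (fun k => g k c)) (g m)); auto.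
Qed.

Lemma cont_pow h x j : continuity_pt h x -> continuity_pt (fun c => h c ^ j) x.
Proof.
  intros H. induction j; simpl.
  - apply continuity_pt_const. intros a b; auto.
  - apply (continuity_pt_mult h (fun c => h c ^ j)); auto.
Qed.

Lemma cont_Phi n F q x : (1 <= n)%nat -> (forall x, continuous F x) ->
  continuity_pt (fun c => Phi n F c q) x.
Proof.
  intros Hn HF. apply (continuity_pt_ext (fun c => q * G n (q * F c) / INR n)).
  { intros; rewrite Phi_closed; auto. }
  unfold Rdiv. apply (continuity_pt_mult _ (fun _ => / INR n)).
  2: { apply continuity_pt_const. intros a b; auto. }
  apply (continuity_pt_mult (fun _ => q)). { apply continuity_pt_const. intros a b; auto. }
  unfold G. apply (cont_sumR n (fun j c => (1 - q * F c) ^ j)). intros k.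
  apply (cont_pow (fun c => 1 - q * F c)).
  apply (continuity_pt_minus (fun _ => 1)). { apply continuity_pt_const. intros a b; auto. }
  apply (continuity_pt_mult (fun _ => q)). { apply continuity_pt_const. intros a b; auto. }
  apply continuity_pt_filterlim. apply HF.
Qed.

Definition anti (Ps : R -> R) := forall x y, x <= y -> Ps y <= Ps x.

Lemma thr_unique cl ch Ps c1 c2 : anti Ps ->
  is_threshold cl ch Ps c1 -> is_threshold cl ch Ps c2 -> c1 = c2.
Proof.
  unfold is_threshold. intros A [H1|[H1|H1]] [H2|[H2|H2]].
  - destruct H1 as [E1 _], H2 as [E2 _]. rewrite E1 in E2. injection E2; auto.
  - exfalso. destruct H2 as [N _]. apply N. exists c1. tauto.
  - exfalso. destruct H2 as [N _]. apply N. exists c1. tauto.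
  - exfalso. destruct H1 as [N _]. apply N. exists c2. tauto.
  - destruct H1 as [_ [E1 _]], H2 as [_ [E2 _]]. rewrite E1 in E2. injection E2; auto.
  - exfalso. destruct H2 as [_ [N _]]. apply N. exists c1. tauto.
  - exfalso. destruct H1 as [N _]. apply N. exists c2. tauto.
  - exfalso. destruct H1 as [_ [N _]]. apply N. exists c2. tauto.
  - destruct H1 as [_ [_ [_ [_ E1]]]], H2 as [_ [_ [_ [_ E2]]]].
    destruct (Rtotal_order c1 c2) as [L|[L|L]]; auto; exfalso.
    + assert (Ps c2 <= Ps c1) by (apply A; lra). lra.
    + assert (Ps c1 <= Ps c2) by (apply A; lra). lra.
Qed.

Lemma thr_transfer cl ch Ps Ps' c0 : Rbar_lt cl ch -> anti Ps' -> Ps' c0 = Ps c0 ->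
  is_threshold cl ch Ps c0 -> is_threshold cl ch Ps' c0.
Proof.
  unfold is_threshold. intros Hlt A E [H|[H|H]].
  - left. rewrite E. auto.
  - right; left. destruct H as [_ [Hc Hp]]. split; [|split; auto; lra].
    intros [a [Ha Hpa]]. subst. simpl in Hlt.
    assert (Ps' c0 <= Ps' a) by (apply A; lra). lra.
  - right; right. destruct H as [_ [_ [H1 [H2 H3]]]]. repeat split; auto; try lra.
    + intros [a [Ha Hpa]]. subst. simpl in H1.
      assert (Ps' c0 <= Ps' a) by (apply A; lra). lra.
    + intros [b [Hb Hpb]]. subst. simpl in H2.
      assert (Ps' b <= Ps' c0) by (apply A; lra). lra.
Qed.

Lemma ivt_strict Ps x y : continuity Ps -> x < y -> x < Ps x -> Ps y < y ->
  exists z, x < z < y /\ Ps z = z.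
Proof.
  intros Hc Hxy Hx Hy.
  destruct (IVT (fun c => c - Ps c) x y) as [z [[Hz1 Hz2] Hz]]; auto.
  - intros t. apply (continuity_pt_minus (fun c => c) Ps). apply derivable_continuous_pt, derivable_pt_id. apply Hc.
  - lra.
  - lra.
  - exists z. simpl in Hz. split; [|lra]. split.
    + destruct (Req_dec z x); [subst; lra|lra].
    + destruct (Req_dec z y); [subst; lra|lra].
Qed.

Lemma thr_exists cl ch Ps : Rbar_lt cl ch -> Rbar_lt 0 ch -> anti Ps -> (forall x, 0 <= Ps x) ->
  continuity Ps -> exists c, is_threshold cl ch Ps c.
Proof.
  intros Hlt H0 A Hpos Hc. unfold is_threshold.
  destruct (classic (exists a, cl = Finite a /\ Ps a <= a)) as [[a Ha]|NL].
  { exists a. left. auto. }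
  destruct (classic (exists b, ch = Finite b /\ b <= Ps b)) as [[b Hb]|NH].
  { exists b. right; left. tauto. }
  assert (exists x y, Rbar_le cl (Finite x) /\ Rbar_le (Finite y) ch /\ x < y /\ x < Ps x /\ Ps y < y)
    as (x & y & Hx & Hy & Hxy & Hpx & Hpy).
  { destruct cl as [a| |]; destruct ch as [b| |]; simpl in Hlt, H0; try contradiction.
    - exists a, b. simpl. repeat split; try lra.
      + destruct (Rlt_le_dec a (Ps a)); auto. exfalso; apply NL; exists a; split; auto.
      + destruct (Rlt_le_dec (Ps b) b); auto. exfalso; apply NH; exists b; split; auto.
    - exists a, (Rmax (a + 1) (Ps a + 1)). simpl. repeat split; auto.
      + apply Rle_refl.
      + assert (a + 1 <= Rmax (a + 1) (Ps a + 1)) by apply Rmax_l. lra.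
      + destruct (Rlt_le_dec a (Ps a)); auto. exfalso; apply NL; exists a; split; auto.
      + assert (a + 1 <= Rmax (a + 1) (Ps a + 1)) by apply Rmax_l.
        assert (Ps a + 1 <= Rmax (a + 1) (Ps a + 1)) by apply Rmax_r.
        assert (Ps (Rmax (a + 1) (Ps a + 1)) <= Ps a) by (apply A; lra). lra.
    - exists (Rmin (-1) (b - 1)), b. simpl. repeat split; auto.
      + apply Rle_refl.
      + assert (Rmin (-1) (b - 1) <= b - 1) by apply Rmin_r. lra.
      + assert (Rmin (-1) (b - 1) <= -1) by apply Rmin_l. specialize (Hpos (Rmin (-1) (b - 1))). lra.
      + destruct (Rlt_le_dec (Ps b) b); auto. exfalso; apply NH; exists b; split; auto.
    - exists (-1), (Ps (-1) + 1). simpl. repeat split; auto.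
      + specialize (Hpos (-1)). lra.
      + specialize (Hpos (-1)). lra.
      + assert (Ps (Ps (-1) + 1) <= Ps (-1)) by (apply A; specialize (Hpos (-1)); lra). lra. }
  destruct (ivt_strict Ps x y Hc Hxy Hpx Hpy) as [z [[Hz1 Hz2] Hz]].
  exists z. right; right. repeat split; auto.
  - destruct cl; simpl in *; auto; lra.
  - destruct ch; simpl in *; auto; lra.
Qed.

Lemma sumR_single K0 (g : nat -> R) s : (1 <= K0)%nat ->
  sumR K0 (fun k => (if Nat.eqb k 0 then s else 0) * g k) = s * g O.
Proof.
  intros HK. destruct K0 as [|m]; [lia|]. rewrite sumR_shift. simpl.
  rewrite sumR_zero; [ring|]. intros; ring.
Qed.

Section PsiProps.
Variables (n L K : nat) (F : R -> R) (mu q v va qa : nat -> R).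
Hypothesis Hn : (1 <= n)%nat.
Hypothesis HF : forall x, 0 <= F x <= 1.
Hypothesis HFm : forall x y, x <= y -> F x <= F y.
Hypothesis Hl : forall l, (l < L)%nat -> 0 <= v l /\ 0 <= mu l /\ 0 <= q l <= 1.
Hypothesis Hk : forall k, (k < K)%nat -> 0 <= va k /\ 0 <= qa k <= 1.

Lemma Psi_anti : anti (Psi n L K F mu q v va qa).
Proof.
  intros x y Hxy. unfold Psi. apply Rplus_le_compat; apply sumR_le.
  - intros l Hl'. destruct (Hl l Hl') as (H1 & H2 & H3). apply Rmult_le_compat_l. nra.
    apply Phi_anti; auto.
  - intros k Hk'. destruct (Hk k Hk') as (H1 & H3). apply Rmult_le_compat_l; auto.
    apply Phi_anti; auto.
Qed.

Lemma Psi_nonneg x : 0 <= Psi n L K F mu q v va qa x.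
Proof.
  unfold Psi. rewrite <- (Rplus_0_r 0). apply Rplus_le_compat.
  - rewrite <- (sumR_zero L (fun _ => 0)) by auto. apply sumR_le.
    intros l Hl'. destruct (Hl l Hl') as (H1 & H2 & H3). apply Rmult_le_pos. nra. apply Phi_nonneg; auto.
  - rewrite <- (sumR_zero K (fun _ => 0)) by auto. apply sumR_le.
    intros k Hk'. destruct (Hk k Hk') as (H1 & H3). apply Rmult_le_pos; auto. apply Phi_nonneg; auto.
Qed.

Lemma Psi_cont : (forall x, continuous F x) -> continuity (Psi n L K F mu q v va qa).
Proof.
  intros Hc x. unfold Psi.
  apply (continuity_pt_plus (fun c => sumR L (fun l => v l * mu l * Phi n F c (q l)))
                            (fun c => sumR K (fun k => va k * Phi n F c (qa k)))).
  - apply (cont_sumR L (fun l c => v l * mu l * Phi n F c (q l))). intros l.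
    apply (continuity_pt_mult (fun _ => v l * mu l)). { apply continuity_pt_const. intros a b; auto. }
    apply cont_Phi; auto.
  - apply (cont_sumR K (fun k c => va k * Phi n F c (qa k))). intros k.
    apply (continuity_pt_mult (fun _ => va k)). { apply continuity_pt_const. intros a b; auto. }
    apply cont_Phi; auto.
Qed.

End PsiProps.

Theorem lemma2 (n L K : nat) (mu q w : nat -> R) (cl ch : Rbar) (F f : R -> R)
  (vbar : R)
  (Hn : (1 <= n)%nat) (HK : (1 <= K)%nat)
  (Hmu : forall l, (l < L)%nat -> 0 < mu l <= 1)
  (Hq : forall l, (l < L)%nat -> 0 < q l <= 1)
  (Hw : forall l, (l < L)%nat -> 0 <= w l)
  (HF : cost_cdf cl ch F f) (Hvbar : 0 < vbar)
  (v va qa : nat -> R)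
  (Hsol : is_solution n L K cl ch F mu q w vbar v va qa) :
  exists v' va' qa' : nat -> R,
    is_solution n L K cl ch F mu q w vbar v' va' qa' /\
    (forall k, (1 <= k < K)%nat -> va' k = 0).
Proof.
  destruct Hsol as [Hfeas Hopt]. destruct Hfeas as (Hbud & Hv & Hva).
  assert (HFb := F_bounds _ _ _ _ HF).
  assert (HFm : forall x y, x <= y -> F x <= F y) by (destruct HF as (_ & _ & H & _); exact H).
  assert (Hlt : Rbar_lt cl ch) by (destruct HF as (H & _); exact H).
  assert (H0ch : Rbar_lt 0 ch) by (destruct HF as (_ & H & _); exact H).
  assert (Hcont : forall x, continuous F x) by (destruct HF as (_ & _ & _ & H & _); exact H).
  assert (Hl : forall l, (l < L)%nat -> 0 <= v l /\ 0 <= mu l /\ 0 <= q l <= 1).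
  { intros l H. specialize (Hv l H). specialize (Hmu l H). specialize (Hq l H). repeat split; lra. }
  assert (AntiPs := Psi_anti n L K F mu q v va qa Hn HFb HFm Hl Hva).
  assert (Hex : exists c, is_threshold cl ch (Psi n L K F mu q v va qa) c).
  { apply thr_exists; auto. apply Psi_nonneg; auto. apply Psi_cont; auto. }
  remember (cstar n L K cl ch F mu q v va qa) as c0 eqn:Ec0.
  assert (T0 : is_threshold cl ch (Psi n L K F mu q v va qa) c0).
  { rewrite Ec0. unfold cstar. apply epsilon_spec. auto. }
  remember (sumR K (fun k => va k * Phi n F c0 (qa k))) as A eqn:EA.
  remember (Phi n F c0 1) as P1 eqn:EP1.
  assert (HP1 : 0 < P1) by (rewrite EP1; apply Phi1_pos; auto).
  remember (sumR K va) as S eqn:ES.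
  assert (HA0 : 0 <= A).
  { rewrite EA. rewrite <- (sumR_zero K (fun _ => 0)) by auto. apply sumR_le.
    intros k Hk'. destruct (Hva k Hk'). apply Rmult_le_pos; auto. apply Phi_nonneg; auto. }
  assert (HAS : A <= S * P1).
  { rewrite EA, ES. rewrite Rmult_comm, <- sumR_scal. apply sumR_le. intros k Hk'. destruct (Hva k Hk').
    rewrite (Rmult_comm P1). apply Rmult_le_compat_l; auto. rewrite EP1. apply Phi_le1; auto. }
  set (s := A / P1).
  assert (Hs0 : 0 <= s) by (unfold s; apply Rdiv_le_0_compat; auto).
  assert (HsS : s <= S) by (unfold s; apply Rle_div_l; auto).
  assert (HsP : s * P1 = A) by (unfold s; field; lra).
  set (va' := fun k => if Nat.eqb k 0 then s else 0).
  set (qa' := fun _ : nat => 1).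
  assert (Hva' : forall k, (k < K)%nat -> 0 <= va' k /\ 0 <= qa' k <= 1).
  { intros k _. unfold va', qa'. destruct (Nat.eqb k 0); lra. }
  assert (EPs' : forall c, Psi n L K F mu q v va' qa' c =
     sumR L (fun l => v l * mu l * Phi n F c (q l)) + s * Phi n F c 1).
  { intros c. unfold Psi. f_equal. unfold va', qa'. apply (sumR_single K (fun _ => Phi n F c 1)); auto. }
  assert (AntiPs' := Psi_anti n L K F mu q v va' qa' Hn HFb HFm Hl Hva').
  assert (T0' : is_threshold cl ch (Psi n L K F mu q v va' qa') c0).
  { apply (thr_transfer _ _ (Psi n L K F mu q v va qa)); auto.
    rewrite EPs'. unfold Psi. rewrite <- EA, <- EP1. lra. }
  assert (Ec0' : cstar n L K cl ch F mu q v va' qa' = c0).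
  { apply (thr_unique cl ch (Psi n L K F mu q v va' qa')); auto.
    unfold cstar. apply epsilon_spec. eauto. }
  assert (Eobj : objective n L K cl ch F mu q w v va' qa' = objective n L K cl ch F mu q w v va qa).
  { unfold objective. cbv zeta. rewrite Ec0', <- Ec0. f_equal.
    unfold va', qa'. rewrite (sumR_single K (fun _ => Pfind n F c0 1)) by auto.
    rewrite (sumR_ext K _ (fun k => INR n * F c0 * (va k * Phi n F c0 (qa k)))).
    - rewrite sumR_scal, <- EA, Pfind_Phi, <- EP1 by auto. rewrite <- HsP. ring.
    - intros k _. rewrite Pfind_Phi by auto. ring. }
  exists v, va', qa'. split; [split|].
  - split; [|split; auto].
    assert (sumR K va' = s).
    { rewrite (sumR_ext K va' (fun k => (if Nat.eqb k 0 then s else 0) * 1)).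
      - rewrite sumR_single by auto. ring.
      - intros; unfold va'; ring. }
    lra.
  - intros v2 va2 qa2 Hf. rewrite Eobj. apply Hopt. auto.
  - intros k Hk'. unfold va'. destruct k; [lia|]. reflexivity.
Qed.
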